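(* Let $d:\mathbb{Z}\to\mathbb{C}$ with $d(n)\to0$ as $|n|\to\infty$, and let $(Ju)(n)=u(n-1)+d(n)u(n)+u(n+1)$ on $\ell^2(\mathbb{Z})$. Suppose that (i) for every $n\in\mathbb{Z}$, $\Im(d(n))=0$ or $\Im(d(n+1))=0$; (ii) $\Im(d(n))\ne0$ for infinitely many $n\in\mathbb{Z}$. If $\sum_{k\in\mathbb{Z}}|k|\,|\Re(d(k))|<\infty$, then $J$ has no boundary eigenvalues.
   Context: The numerical range is $\operatorname{Num}(J)=\{\langle Ju,u\rangle:\|u\|=1\}$, and a boundary eigenvalue of $J$ is an eigenvalue of $J$ lying in the topological boundary of $\operatorname{Num}(J)$. *)

(* Defs.v *)
From Stdlib Require Import Reals ZArith.
Open Scope R_scope.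

Definition Cx : Type := (R * R)%type.
Definition Re (z : Cx) : R := fst z.
Definition Im (z : Cx) : R := snd z.
Definition C0 : Cx := (0, 0).
Definition Cadd (z w : Cx) : Cx := (Re z + Re w, Im z + Im w).
Definition Csub (z w : Cx) : Cx := (Re z - Re w, Im z - Im w).
Definition Cmul (z w : Cx) : Cx :=
  (Re z * Re w - Im z * Im w, Re z * Im w + Im z * Re w).
Definition Cconj (z : Cx) : Cx := (Re z, - Im z).
Definition Cnorm2 (z : Cx) : R := Re z * Re z + Im z * Im z.
Definition Cmod (z : Cx) : R := sqrt (Cnorm2 z).

Definition zsum_to (f : Z -> R) (s : R) : Prop :=
  infinite_sum (fun k : nat => f (Z.of_nat k) + f (- Z.of_nat k - 1)%Z) s.
Definition zsum_toC (f : Z -> Cx) (s : Cx) : Prop :=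
  zsum_to (fun n => Re (f n)) (Re s) /\ zsum_to (fun n => Im (f n)) (Im s).

Definition l2 (u : Z -> Cx) : Prop := exists s, zsum_to (fun n => Cnorm2 (u n)) s.

Definition Jop (d : Z -> Cx) (u : Z -> Cx) (n : Z) : Cx :=
  Cadd (Cadd (u (n - 1)%Z) (Cmul (d n) (u n))) (u (n + 1)%Z).

(* Num(J) = { <Ju,u> : ||u|| = 1 },  <v,u> = sum_n v(n) conj(u(n)) *)
Definition NumRange (d : Z -> Cx) (z : Cx) : Prop :=
  exists u : Z -> Cx,
    zsum_to (fun n => Cnorm2 (u n)) 1 /\
    zsum_toC (fun n => Cmul (Jop d u n) (Cconj (u n))) z.

Definition in_closure (S : Cx -> Prop) (z : Cx) : Prop :=
  forall eps, 0 < eps -> exists w, S w /\ Cmod (Csub w z) < eps.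
Definition in_interior (S : Cx -> Prop) (z : Cx) : Prop :=
  exists eps, 0 < eps /\ forall w, Cmod (Csub w z) < eps -> S w.
Definition in_boundary (S : Cx -> Prop) (z : Cx) : Prop :=
  in_closure S z /\ ~ in_interior S z.

Definition eigenvalue (d : Z -> Cx) (lam : Cx) : Prop :=
  exists u : Z -> Cx, l2 u /\ (exists n, u n <> C0) /\
    forall n, Jop d u n = Cmul lam (u n).

Definition boundary_eigenvalue (d : Z -> Cx) (lam : Cx) : Prop :=
  eigenvalue d lam /\ in_boundary (NumRange d) lam.

(* Main.v *)
Require Import Defs.
From Stdlib Require Import Reals ZArith Lra Lia Psatz Classical.
Open Scope R_scope.

Lemma isum_ps a b l : (forall N, sum_f_R0 a N = sum_f_R0 b N) -> infinite_sum a l -> infinite_sum b l.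
Proof. intros H Hs eps he. destruct (Hs eps he) as [N HN]; exists N; intros n Hn. rewrite <- H; auto. Qed.

Lemma isum_cv b U l : (forall N, U N = sum_f_R0 b N) -> Un_cv U l -> infinite_sum b l.
Proof. intros H Hs eps he. destruct (Hs eps he) as [N HN]; exists N; intros n Hn. rewrite <- H; auto. Qed.

Lemma zsum_ext f g S : (forall n, f n = g n) -> zsum_to f S -> zsum_to g S.
Proof. unfold zsum_to; intros H. apply isum_ps. intros N; apply sum_eq; intros; rewrite !H; auto. Qed.

Lemma zsum_plus f g S T : zsum_to f S -> zsum_to g T -> zsum_to (fun n => f n + g n) (S+T).
Proof. unfold zsum_to; intros Hf Hg.
  pose proof (CV_plus _ _ _ _ Hf Hg) as H. eapply isum_cv; [|exact H].
  intros N; simpl. rewrite <- sum_plus. apply sum_eq; intros; ring. Qed.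

Lemma zsum_scal f S c : zsum_to f S -> zsum_to (fun n => c * f n) (c*S).
Proof. unfold zsum_to; intros Hf.
  assert (Hc : Un_cv (fun _ => c) c). { intros eps he; exists 0%nat; intros; unfold Rdist. rewrite Rminus_diag, Rabs_R0; lra. }
  pose proof (CV_mult _ _ _ _ Hc Hf) as H. eapply isum_cv; [|exact H].
  intros N; simpl. rewrite scal_sum. apply sum_eq; intros; ring. Qed.

Definition dlt (m : Z) (v : R) (n : Z) : R := if Z.eq_dec n m then v else 0.

Lemma zsum_delta m v : zsum_to (dlt m v) v.
Proof.
  set (k0 := Z.to_nat (if Z_le_dec 0 m then m else (- m - 1)%Z)).
  assert (Ht : forall k, dlt m v (Z.of_nat k) + dlt m v (- Z.of_nat k - 1)%Z = if Nat.eq_dec k k0 then v else 0).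
  { intros k; unfold dlt, k0. destruct (Z_le_dec 0 m);
    repeat (destruct Z.eq_dec; try lia); destruct Nat.eq_dec; try lia; try lra. }
  assert (Hp : forall N, sum_f_R0 (fun k => dlt m v (Z.of_nat k) + dlt m v (- Z.of_nat k - 1)%Z) N = if le_dec k0 N then v else 0).
  { intros N; rewrite (sum_eq _ (fun k => if Nat.eq_dec k k0 then v else 0)) by (intros; apply Ht).
    induction N; cbn [sum_f_R0]; rewrite ?IHN; repeat destruct Nat.eq_dec; repeat destruct le_dec; try lia; lra. }
  unfold zsum_to. intros eps he. exists k0. intros n Hn. rewrite Hp. destruct le_dec; try lia.
  unfold Rdist. rewrite Rminus_diag, Rabs_R0; lra.
Qed.

Fixpoint ssum (f : nat -> R) (k : nat) : R :=
  match k with O => 0 | S k' => ssum f k' + f k' end.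

Lemma ssum_nonneg f k : (forall i, 0 <= f i) -> 0 <= ssum f k.
Proof. intros H; induction k; simpl; [lra|specialize (H k); lra]. Qed.

Lemma ssum_term f k i : (forall i, 0 <= f i) -> (i < k)%nat -> f i <= ssum f k.
Proof. intros H; induction k; intros Hi; [lia|]. simpl.
  destruct (Nat.eq_dec i k) as [->|Hn].
  - pose proof (ssum_nonneg f k H); lra.
  - assert (i < k)%nat by lia. specialize (IHk H0). specialize (H k); lra. Qed.

Section OneD.
Variables (x q : Z -> R) (lam : R).
Hypothesis Heq : forall n, x (n-1)%Z + q n * x n + x (n+1)%Z = lam * x n.

Lemma cz a : x a = 0 -> x (a+1)%Z = 0 -> forall n, x n = 0.
Proof.
  intros H0 H1.
  assert (Hf : forall k : nat, x (a + Z.of_nat k)%Z = 0 /\ x (a + Z.of_nat k + 1)%Z = 0).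
  { induction k as [|k [IH1 IH2]].
    - simpl. rewrite Z.add_0_r. auto.
    - pose proof (Heq (a + Z.of_nat k + 1)%Z) as E.
      replace (a + Z.of_nat k + 1 - 1)%Z with (a + Z.of_nat k)%Z in E by lia.
      replace (a + Z.of_nat (S k))%Z with (a + Z.of_nat k + 1)%Z by lia.
      split; auto. rewrite IH1, IH2 in E. lra. }
  assert (Hb : forall k : nat, x (a - Z.of_nat k)%Z = 0 /\ x (a - Z.of_nat k + 1)%Z = 0).
  { induction k as [|k [IH1 IH2]].
    - simpl. rewrite Z.sub_0_r. auto.
    - pose proof (Heq (a - Z.of_nat k)%Z) as E.
      replace (a - Z.of_nat (S k))%Z with (a - Z.of_nat k - 1)%Z by lia.
      replace (a - Z.of_nat k - 1 + 1)%Z with (a - Z.of_nat k)%Z by lia.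
      split; auto. rewrite IH1, IH2 in E. lra. }
  intros n. destruct (Z_le_dec a n).
  - replace n with (a + Z.of_nat (Z.to_nat (n - a)))%Z by lia. apply Hf.
  - replace n with (a - Z.of_nat (Z.to_nat (a - n)))%Z by lia. apply Hb.
Qed.

Hypothesis Hx0 : forall eps, 0 < eps -> exists N : Z, forall n, (N <= n)%Z -> Rabs (x n) < eps.
Hypothesis Hm : forall eps, 0 < eps -> exists K : nat, forall k, (K <= k)%nat -> forall j,
   ssum (fun i => INR (k+i) * Rabs (q (Z.of_nat (k+i)))) j < eps.
Hypothesis Hz : forall N : Z, exists n, (N <= n)%Z /\ x n = 0.
Hypothesis Hnz : exists n, x n <> 0.

Lemma zero_next n : x n = 0 -> x (n+1)%Z <> 0.
Proof. intros H H'. destruct Hnz as [m Hm']. apply Hm'. apply (cz n); auto. Qed.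

Lemma q_small : forall eps, 0 < eps -> exists N : Z, forall n, (N <= n)%Z -> Rabs (q n) < eps.
Proof. intros eps he. destruct (Hm eps he) as [K HK]. exists (Z.of_nat (S K)). intros n Hn.
  specialize (HK (Z.to_nat n) ltac:(lia) 1%nat). simpl in HK. rewrite Nat.add_0_r, Z2Nat.id in HK by lia.
  assert (1 <= INR (Z.to_nat n)). { replace 1 with (INR 1) by reflexivity. apply le_INR. lia. }
  pose proof (Rabs_pos (q n)). nra. Qed.

Lemma case_big : 2 < Rabs lam -> False.
Proof.
  intros Hl. destruct (q_small (Rabs lam - 2) ltac:(lra)) as [N HN].
  destruct (Hz N) as [n0 [Hn0 Hx]].
  pose proof (zero_next n0 Hx) as Hc.
  assert (P : forall k : nat, Rabs (x (n0+1)%Z) <= Rabs (x (n0 + Z.of_nat k + 1)%Z) /\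
                 Rabs (x (n0 + Z.of_nat k)%Z) <= Rabs (x (n0 + Z.of_nat k + 1)%Z)).
  { induction k as [|k [IH1 IH2]].
    - simpl. rewrite Z.add_0_r, Hx, Rabs_R0. split; [lra| apply Rabs_pos].
    - replace (n0 + Z.of_nat (S k))%Z with (n0 + Z.of_nat k + 1)%Z by lia.
      set (m := (n0 + Z.of_nat k + 1)%Z) in *.
      pose proof (Heq m) as E. replace (m - 1)%Z with (n0 + Z.of_nat k)%Z in E by (unfold m; lia).
      assert (Eq : x (m+1)%Z = (lam - q m) * x m - x (n0 + Z.of_nat k)%Z) by lra.
      assert (Hq : Rabs (q m) < Rabs lam - 2) by (apply HN; unfold m; lia).
      assert (H1 : Rabs (x (m+1)%Z) >= Rabs ((lam - q m) * x m) - Rabs (x (n0 + Z.of_nat k)%Z)).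
      { rewrite Eq. pose proof (Rabs_triang_inv ((lam - q m) * x m) (x (n0 + Z.of_nat k)%Z)). lra. }
      rewrite Rabs_mult in H1.
      assert (H2 : Rabs (lam - q m) >= 2).
      { pose proof (Rabs_triang_inv lam (q m)). lra. }
      pose proof (Rabs_pos (x m)). split; nra. }
  destruct (Hx0 (Rabs (x (n0+1)%Z)) ltac:(apply Rabs_pos_lt; auto)) as [N1 HN1].
  destruct (P (Z.to_nat (Z.abs N1 + Z.abs n0))) as [P1 _].
  specialize (HN1 (n0 + Z.of_nat (Z.to_nat (Z.abs N1 + Z.abs n0)) + 1)%Z ltac:(lia)). lra.
Qed.
End OneD.

Lemma ssum_ext f g k : (forall i, f i = g i) -> ssum f k = ssum g k.
Proof. intros H; induction k; simpl; [lra|rewrite IHk, H; lra]. Qed.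

Lemma ssum_le f g k : (forall i, f i <= g i) -> ssum f k <= ssum g k.
Proof. intros H; induction k; simpl; [lra|specialize (H k); lra]. Qed.

Section Energy.
Variables (x q : Z -> R) (lam : R).
Hypothesis Heq : forall n, x (n-1)%Z + q n * x n + x (n+1)%Z = lam * x n.
Hypothesis Hx0 : forall eps, 0 < eps -> exists N : Z, forall n, (N <= n)%Z -> Rabs (x n) < eps.
Hypothesis Hm : forall eps, 0 < eps -> exists K : nat, forall k, (K <= k)%nat -> forall j,
   ssum (fun i => INR (k+i) * Rabs (q (Z.of_nat (k+i)))) j < eps.
Hypothesis Hnz : exists n, x n <> 0.
Hypothesis Hl : Rabs lam < 2.

Let E n := x n * x n + x (n+1)%Z * x (n+1)%Z - lam * x n * x (n+1)%Z.

Lemma E_lower n : E n >= (1 - Rabs lam / 2) * (x n * x n + x (n+1)%Z * x (n+1)%Z).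
Proof. unfold E. set (a := x n). set (b := x (n+1)%Z).
  assert (Rabs (lam * a * b) <= Rabs lam * (a*a + b*b) / 2).
  { rewrite !Rabs_mult. pose proof (Rabs_pos lam).
    assert (Rabs a * Rabs b <= (a*a+b*b)/2). { pose proof (Rle_0_sqr (Rabs a - Rabs b)).
      assert (Rabs a * Rabs a = a * a) by (rewrite <- Rabs_mult; apply Rabs_pos_eq; nra).
      assert (Rabs b * Rabs b = b * b) by (rewrite <- Rabs_mult; apply Rabs_pos_eq; nra). unfold Rsqr in *; nra. }
    nra. }
  pose proof (Rle_abs (lam*a*b)). nra. Qed.

Lemma E_step n : Rabs (q n) <= 1 ->
  E n >= E (n-1)%Z * (1 - 8 / (2 - Rabs lam) * Rabs (q n)).
Proof. intros Hq.
  pose proof (E_lower (n-1)) as HL. replace (n - 1 + 1)%Z with n in HL by lia.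
  pose proof (Heq n) as En.
  unfold E in *. replace (n - 1 + 1)%Z with n in * by lia.
  set (a := x (n-1)%Z) in *. set (b := x n) in *. set (c := x (n+1)%Z) in *.
  set (t := q n) in *.
  assert (Hc : c = lam * b - a - t * b) by lra.
  assert (Hid : b * b + c * c - lam * b * c = b * b + a * a - lam * a * b + (t * b * (2 * a - lam * b) + t * t * b * b)).
  { rewrite Hc. ring. }
  rewrite Hid.
  assert (Hy : Rabs (b * (2*a - lam * b)) <= 3 * (a*a + b*b)).
  { apply Rabs_le. 
    assert (-2 < lam < 2) by (apply Rabs_def2 in Hl; lra).
    pose proof (Rle_0_sqr (a-b)). pose proof (Rle_0_sqr (a+b)). pose proof (Rle_0_sqr b). unfold Rsqr in *. split; nra. }
  assert (Ht : t * (b * (2*a - lam*b)) >= - Rabs t * (3 * (a*a+b*b))).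
  { pose proof (Rabs_pos t). pose proof (Rle_abs (-(t * (b * (2*a - lam*b))))).
    rewrite Rabs_Ropp, Rabs_mult in H0. nra. }
  set (F := b * b + a * a - lam * a * b) in *.
  assert (HF : a*a + b*b <= F * (2 / (2 - Rabs lam))).
  { assert (0 < 2 - Rabs lam) by lra.
    apply (Rmult_le_reg_r ((2 - Rabs lam)/2)). { apply Rdiv_lt_0_compat; lra. }
    replace (F * (2 / (2 - Rabs lam)) * ((2 - Rabs lam) / 2)) with F by (field; lra).
    unfold F; lra. }
  assert (0 <= F). { assert (0 <= (1 - Rabs lam/2) * (a*a+b*b)) by (apply Rmult_le_pos; nra). unfold F; lra. }
  assert (0 <= t * t * b * b) by nra.
  assert (Hr : 8 / (2 - Rabs lam) * Rabs t * F = 4 * Rabs t * (F * (2 / (2 - Rabs lam)))) by (field; lra).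
  pose proof (Rabs_pos t).
  assert (Rabs t * (a*a+b*b) <= Rabs t * (F * (2 / (2 - Rabs lam)))) by (apply Rmult_le_compat_l; lra).
  assert (0 <= Rabs t * (F * (2 / (2 - Rabs lam)))).
  { apply Rmult_le_pos; auto. apply Rmult_le_pos; auto. apply Rlt_le, Rdiv_lt_0_compat; lra. }
  assert (t * b * (2 * a - lam * b) = t * (b * (2*a - lam*b))) by ring.
  nra.
Qed.

Lemma E_upper n : E n <= 2 * (x n * x n + x (n+1)%Z * x (n+1)%Z).
Proof. unfold E. set (a := x n). set (b := x (n+1)%Z).
  assert (-2 < lam < 2) by (apply Rabs_def2 in Hl; lra).
  pose proof (Rle_0_sqr (a-b)). pose proof (Rle_0_sqr (a+b)). unfold Rsqr in *. nra. Qed.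

Lemma sq_lt y e : Rabs y < e -> y * y < e * e.
Proof. intros H. pose proof (Rabs_pos y). assert (y*y = Rabs y * Rabs y) by (rewrite <- Rabs_mult; symmetry; apply Rabs_pos_eq; nra). nra. Qed.

Lemma case_small : False.
Proof.
  assert (HC : 4 <= 8 / (2 - Rabs lam)).
  { pose proof (Rabs_pos lam). apply (Rmult_le_reg_r (2 - Rabs lam)); [lra|].
    replace (8 / (2 - Rabs lam) * (2 - Rabs lam)) with 8 by (field; lra). lra. }
  set (C := 8 / (2 - Rabs lam)) in *.
  destruct (Hm (1 / (2*C)) ltac:(apply Rdiv_lt_0_compat; lra)) as [K HK].
  set (K' := S K). specialize (HK K' ltac:(unfold K'; lia)).
  set (n0 := (Z.of_nat K' - 1)%Z).
  set (Sq := fun j => ssum (fun i => Rabs (q (Z.of_nat (K'+i)))) j).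
  assert (HS : forall j, Sq j <= 1 / (2*C)).
  { intros j. apply Rlt_le. eapply Rle_lt_trans; [|apply (HK j)]. unfold Sq. apply ssum_le. intros i.
    assert (1 <= INR (K'+i)) by (replace 1 with (INR 1) by reflexivity; apply le_INR; unfold K'; lia).
    pose proof (Rabs_pos (q (Z.of_nat (K'+i)))). nra. }
  assert (HSn : forall j, 0 <= Sq j) by (intros; apply ssum_nonneg; intros; apply Rabs_pos).
  assert (HCS : forall j, C * Sq j <= 1/2).
  { intros j. specialize (HS j). replace (1/2) with (C * (1/(2*C))) by (field; lra). apply Rmult_le_compat_l; lra. }
  assert (HE0 : 0 <= E n0).
  { pose proof (E_lower n0). assert (0 <= (1 - Rabs lam/2) * (x n0 * x n0 + x (n0+1)%Z * x (n0+1)%Z)).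
    { apply Rmult_le_pos; [lra|]. nra. } lra. }
  assert (Hclaim : forall j, E (Z.of_nat (K' + j)) >= E n0 * (1 - C * Sq (S j))).
  { induction j.
    - rewrite Nat.add_0_r. unfold Sq; cbn [ssum]. rewrite Nat.add_0_r.
      assert (Rabs (q (Z.of_nat K')) <= 1/2 / C).
      { pose proof (HCS 1%nat). unfold Sq in H; cbn [ssum] in H; rewrite Nat.add_0_r in H.
        apply (Rmult_le_reg_l C); [lra|]. replace (C * (1/2/C)) with (1/2) by (field; lra). lra. }
      assert (Hq1 : Rabs (q (Z.of_nat K')) <= 1).
      { assert (1/2/C <= 1). { apply (Rmult_le_reg_l C); [lra|]. replace (C * (1/2/C)) with (1/2) by (field; lra). lra. } lra. }
      pose proof (E_step (Z.of_nat K') Hq1) as St. fold C in St.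
      replace (Z.of_nat K' - 1)%Z with n0 in St by reflexivity. lra.
    - set (n := Z.of_nat (K' + S j)).
      assert (Hn1 : (n - 1)%Z = Z.of_nat (K' + j)) by (unfold n; lia).
      assert (HSS : Sq (S (S j)) = Sq (S j) + Rabs (q n)).
      { unfold Sq, n. cbn [ssum]. reflexivity. }
      assert (Hqn : C * Rabs (q n) <= 1/2).
      { pose proof (HCS (S (S j))). pose proof (HSn (S j)). rewrite HSS in H. nra. }
      assert (Hq1 : Rabs (q n) <= 1) by (pose proof (Rabs_pos (q n)); nra).
      pose proof (E_step n Hq1) as St. fold C in St. rewrite Hn1 in St.
      rewrite HSS. pose proof (Rabs_pos (q n)). pose proof (HSn (S j)).
      assert (0 <= 1 - C * Rabs (q n)) by lra.
      assert (E (Z.of_nat (K' + j)) * (1 - C * Rabs (q n)) >= E n0 * (1 - C * Sq (S j)) * (1 - C * Rabs (q n))).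
      { apply Rle_ge, Rmult_le_compat_r; lra. }
      assert (0 <= E n0 * (C * Sq (S j) * (C * Rabs (q n)))).
      { apply Rmult_le_pos; auto. apply Rmult_le_pos; nra. }
      nra. }
  assert (HE0p : 0 < E n0).
  { destruct (Req_dec (x n0) 0) as [H0|H0].
    - destruct (Req_dec (x (n0+1)%Z) 0) as [H1|H1].
      + destruct Hnz as [m Hm0]. exfalso; apply Hm0. apply (cz x q lam Heq n0); auto.
      + pose proof (E_lower n0). assert (0 < x (n0+1)%Z * x (n0+1)%Z) by (apply Rsqr_pos_lt; auto).
        assert (0 < (1 - Rabs lam/2) * (x n0 * x n0 + x (n0+1)%Z * x (n0+1)%Z)).
        { apply Rmult_lt_0_compat; [lra|]. nra. } lra.
    - pose proof (E_lower n0). assert (0 < x n0 * x n0) by (apply Rsqr_pos_lt; auto).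
      assert (0 < (1 - Rabs lam/2) * (x n0 * x n0 + x (n0+1)%Z * x (n0+1)%Z)).
      { apply Rmult_lt_0_compat; [lra|]. nra. } lra. }
  set (e := Rmin 1 (E n0 / 8)).
  assert (He : 0 < e) by (unfold e; apply Rmin_pos; lra).
  assert (He1 : e <= 1) by apply Rmin_l. assert (He2 : e <= E n0 / 8) by apply Rmin_r.
  destruct (Hx0 e He) as [N HN].
  set (j := Z.to_nat (Z.abs N)).
  set (n := Z.of_nat (K' + j)).
  assert (h1 := sq_lt _ _ (HN n ltac:(unfold n, j; lia))).
  assert (h2 := sq_lt _ _ (HN (n+1)%Z ltac:(unfold n, j; lia))).
  pose proof (E_upper n). pose proof (Hclaim j). fold n in H0.
  pose proof (HCS (S j)). pose proof (HSn (S j)).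
  assert (E n0 * (1 - C * Sq (S j)) >= E n0 / 2) by nra.
  nra.
Qed.
End Energy.

Lemma lam2_pos (x q : Z -> R) (k0 : nat)
  (Heq : forall n, x (n-1)%Z + q n * x n + x (n+1)%Z = 2 * x n)
  (H0 : x (Z.of_nat k0) = 0) (Hc : 0 < x (Z.of_nat k0 + 1)%Z)
  (HM : forall j, ssum (fun i => INR (k0+1+i) * Rabs (q (Z.of_nat (k0+1+i)))) j < 1/4) :
  forall k, x (Z.of_nat (k0 + S k)) >= x (Z.of_nat k0 + 1)%Z.
Proof.
  set (c := x (Z.of_nat k0 + 1)%Z) in *.
  set (y := fun k => x (Z.of_nat (k0 + k))).
  set (qq := fun k => q (Z.of_nat (k0 + 1 + k))).
  assert (Hy0 : y 0%nat = 0) by (unfold y; rewrite Nat.add_0_r; auto).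
  assert (Hy1 : y 1%nat = c) by (unfold y, c; f_equal; lia).
  assert (Hrec : forall k, y (S (S k)) = 2 * y (S k) - y k - qq k * y (S k)).
  { intros k. unfold y, qq. pose proof (Heq (Z.of_nat (k0 + S k))) as E.
    replace (Z.of_nat (k0 + S k) - 1)%Z with (Z.of_nat (k0 + k)) in E by lia.
    replace (Z.of_nat (k0 + S k) + 1)%Z with (Z.of_nat (k0 + S (S k))) in E by lia.
    replace (k0 + 1 + k)%nat with (k0 + S k)%nat by lia. lra. }
  set (W := fun k => ssum (fun i => qq i * y (S i)) k).
  set (M := fun k => ssum (fun i => INR (k0+1+i) * Rabs (qq i)) k).
  assert (HI : forall k, y (S k) - y k = c - W k).
  { induction k.
    - rewrite Hy0, Hy1. unfold W; cbn [ssum]. lra.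
    - rewrite Hrec. unfold W in *; cbn [ssum]. lra. }
  assert (HM' : forall k, M k < 1/4) by (intros; apply HM).
  assert (HMn : forall k, 0 <= M k).
  { intros; apply ssum_nonneg; intros; apply Rmult_le_pos; [apply pos_INR|apply Rabs_pos]. }
  assert (HB : forall k, 0 <= y k <= 2 * c * INR k /\ Rabs (W k) <= 2 * c * M k).
  { induction k as [|k [[IH1 IH2] IH3]].
    - rewrite Hy0. unfold W, M; cbn [ssum]. rewrite Rabs_R0. simpl INR. lra.
    - pose proof (HI k) as Ik. pose proof (HM' k). pose proof (HMn k).
      assert (Hw : Rabs (W k) < c / 2) by nra.
      apply Rabs_def2 in Hw.
      assert (Hys : 0 <= y (S k) <= 2 * c * INR (S k)) by (rewrite S_INR; lra).
      split; auto.
      unfold W, M; cbn [ssum]. fold (W k). fold (M k).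
      eapply Rle_trans; [apply Rabs_triang|]. rewrite Rabs_mult.
      assert (Rabs (y (S k)) <= 2 * c * INR (k0+1+k)).
      { rewrite Rabs_pos_eq by lra. assert (INR (S k) <= INR (k0+1+k)) by (apply le_INR; lia). nra. }
      pose proof (Rabs_pos (qq k)). pose proof (Rabs_pos (y (S k))). nra. }
  assert (Hmono : forall k, y (S (S k)) >= y (S k)).
  { intros k. pose proof (HI (S k)). destruct (HB (S k)) as [_ Hw]. pose proof (HM' (S k)).
    assert (W (S k) <= Rabs (W (S k))) by apply Rle_abs. pose proof (HMn (S k)). nra. }
  intros k. change (y (S k) >= c). induction k.
  - rewrite Hy1; lra.
  - pose proof (Hmono k); lra.
Qed.

Section Lam2.
Variables (x q : Z -> R).
Hypothesis Heq : forall n, x (n-1)%Z + q n * x n + x (n+1)%Z = 2 * x n.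
Hypothesis Hx0 : forall eps, 0 < eps -> exists N : Z, forall n, (N <= n)%Z -> Rabs (x n) < eps.
Hypothesis Hm : forall eps, 0 < eps -> exists K : nat, forall k, (K <= k)%nat -> forall j,
   ssum (fun i => INR (k+i) * Rabs (q (Z.of_nat (k+i)))) j < eps.
Hypothesis Hz : forall N : Z, exists n, (N <= n)%Z /\ x n = 0.
Hypothesis Hnz : exists n, x n <> 0.

Lemma case_two : False.
Proof.
  destruct (Hm (1/4) ltac:(lra)) as [K HK].
  destruct (Hz (Z.of_nat K)) as [n0 [Hn0 Hx]].
  set (k0 := Z.to_nat n0). assert (Hk0 : n0 = Z.of_nat k0) by (unfold k0; lia).
  rewrite Hk0 in Hx.
  pose proof (zero_next x q 2 Heq Hnz _ Hx) as Hc.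
  specialize (HK (k0+1)%nat ltac:(lia)).
  set (c := x (Z.of_nat k0 + 1)%Z) in *.
  assert (G : forall k, Rabs (x (Z.of_nat (k0 + S k))) >= Rabs c).
  { destruct (Rlt_le_dec 0 c) as [Hp|Hn].
    - intros k. pose proof (lam2_pos x q k0 Heq Hx Hp HK k). fold c in H.
      rewrite (Rabs_pos_eq c), Rabs_pos_eq; lra.
    - assert (Hp : 0 < (fun n => - x n) (Z.of_nat k0 + 1)%Z) by (simpl; fold c; lra).
      intros k. pose proof (lam2_pos (fun n => - x n) q k0 ltac:(intros n; specialize (Heq n); lra)
         ltac:(cbv beta; rewrite Hx; lra) Hp HK k) as G. simpl in G. fold c in G.
      rewrite (Rabs_left1 c), Rabs_left1; lra. }
  destruct (Hx0 (Rabs c) ltac:(apply Rabs_pos_lt; auto)) as [N HN].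
  specialize (G (Z.to_nat (Z.abs N))). specialize (HN (Z.of_nat (k0 + S (Z.to_nat (Z.abs N)))) ltac:(lia)). lra.
Qed.
End Lam2.

Lemma oneside (x q : Z -> R) (lam : R)
  (Heq : forall n, x (n-1)%Z + q n * x n + x (n+1)%Z = lam * x n)
  (Hx0 : forall eps, 0 < eps -> exists N : Z, forall n, (N <= n)%Z -> Rabs (x n) < eps)
  (Hm : forall eps, 0 < eps -> exists K : nat, forall k, (K <= k)%nat -> forall j,
   ssum (fun i => INR (k+i) * Rabs (q (Z.of_nat (k+i)))) j < eps)
  (Hz : forall N : Z, exists n, (N <= n)%Z /\ x n = 0)
  (Hnz : exists n, x n <> 0) : False.
Proof.
  destruct (Rlt_le_dec (Rabs lam) 2) as [H1|H1].
  { exact (case_small x q lam Heq Hx0 Hm Hnz H1). }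
  destruct (Rle_lt_dec (Rabs lam) 2) as [H2|H2].
  2: { exact (case_big x q lam Heq Hx0 Hm Hz Hnz H2). }
  assert (Rabs lam = 2) by lra.
  destruct (Rle_lt_dec 0 lam) as [Hp|Hn].
  - rewrite Rabs_pos_eq in H by lra. subst lam.
    exact (case_two x q Heq Hx0 Hm Hz Hnz).
  - rewrite Rabs_left in H by lra. assert (lam = -2) by lra. subst lam.
    set (x' := fun n => if Z.even n then x n else - x n).
    assert (Hab : forall n, Rabs (x' n) = Rabs (x n)).
    { intros n; unfold x'; destruct (Z.even n); rewrite ?Rabs_Ropp; auto. }
    apply (case_two x' (fun n => - q n)).
    + intros n. specialize (Heq n). unfold x'.
      rewrite Z.even_sub, Z.even_add. simpl. destruct (Z.even n); simpl; lra.
    + intros eps he. destruct (Hx0 eps he) as [N HN]. exists N; intros; rewrite Hab; auto.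
    + intros eps he. destruct (Hm eps he) as [K HK]. exists K. intros k Hk j.
      eapply Rle_lt_trans; [|apply (HK k Hk j)]. right. apply ssum_ext. intros; rewrite Rabs_Ropp; auto.
    + intros N. destruct (Hz N) as [n [Hn1 Hn2]]. exists n; split; auto. unfold x'; rewrite Hn2; destruct Z.even; lra.
    + destruct Hnz as [n Hn']. exists n. unfold x'; destruct Z.even; auto. intros C; apply Hn'; lra.
Qed.

Lemma zsum_combo (g f : Z -> R) G A m1 m2 m3 h1 h2 h3 :
  zsum_to g G -> (forall n, f n = A * g n + (dlt m1 h1 n + dlt m2 h2 n + dlt m3 h3 n)) ->
  zsum_to f (A*G + (h1+h2+h3)).
Proof. intros Hg Hf. eapply zsum_ext; [intros n; symmetry; apply Hf|].
  apply zsum_plus; [apply zsum_scal; auto|]. repeat apply zsum_plus; apply zsum_delta. Qed.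

Definition scale (r : R) (z : Cx) : Cx := (r * Re z, r * Im z).
Definition cd (k : Z) (v : Cx) (n : Z) : Cx := if Z.eq_dec n k then v else C0.

Lemma Cx_ext (z w : Cx) : Re z = Re w -> Im z = Im w -> z = w.
Proof. destruct z, w; unfold Re, Im; simpl; intros; subst; auto. Qed.

Section Build.
Variables (d u : Z -> Cx) (lam : Cx) (U : R) (m : Z) (al s : Cx) (ka : R).
Hypothesis Heig : forall n, Jop d u n = Cmul lam (u n).
Hypothesis HU : zsum_to (fun n => Cnorm2 (u n)) U.

Definition wv (n : Z) : Cx := scale ka (Cadd (Cmul al (u n)) (cd m s n)).

Lemma wv_norm : zsum_to (fun n => Cnorm2 (wv n))
   (ka*ka*Cnorm2 al * U + (ka*ka*(Cnorm2 (Cadd (Cmul al (u m)) s) - Cnorm2 al * Cnorm2 (u m)) + 0 + 0)).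
Proof.
  apply zsum_combo with (g := fun n => Cnorm2 (u n)) (m1 := m) (m2 := m) (m3 := m); auto.
  intros n. unfold wv, dlt, cd. destruct (Z.eq_dec n m).
  - subst n. unfold Cnorm2, scale, Cadd, Cmul, Re, Im, C0; simpl. ring.
  - unfold Cnorm2, scale, Cadd, Cmul, Re, Im, C0; simpl. ring.
Qed.

Definition K0 := scale (ka*ka*Cnorm2 al) lam.
Definition H1 := scale (ka*ka) (Cmul (Cmul s (Cconj al)) (Cconj (u (m-1)%Z))).
Definition H2 := scale (ka*ka) (Cadd (Cadd (Cmul (Cmul (Cmul al lam) (u m)) (Cconj s))
                     (Cmul (Cmul (Cmul s (d m)) (Cconj al)) (Cconj (u m))))
                     (Cmul (Cmul s (Cconj s)) (d m))).
Definition H3 := scale (ka*ka) (Cmul (Cmul s (Cconj al)) (Cconj (u (m+1)%Z))).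

Lemma prod_pt n : Cmul (Jop d wv n) (Cconj (wv n)) =
  Cadd (scale (Cnorm2 (u n)) K0) (Cadd (cd (m-1) H1 n) (Cadd (cd m H2 n) (cd (m+1) H3 n))).
Proof.
  pose proof (Heig n) as E. unfold Jop in E.
  assert (E1 := f_equal Re E). assert (E2 := f_equal Im E).
  unfold Jop, wv, cd, K0, H1, H2, H3.
  assert (Hcase : m = n \/ m = (n+1)%Z \/ m = (n-1)%Z \/ (m <> n /\ m <> (n+1)%Z /\ m <> (n-1)%Z)) by lia.
  destruct Hcase as [->|[->|[->|[N1 [N2 N3]]]]];
  rewrite ?Z.add_simpl_r, ?Z.sub_add;
  repeat match goal with |- context[Z.eq_dec ?a ?b] => destruct (Z.eq_dec a b); try lia end;
  destruct (u (n+1)%Z) as [c1 c2]; destruct (u n) as [b1 b2]; destruct (u (n-1)%Z) as [a1 a2];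
  unfold Re, Im, Cadd, Cmul, Cconj, scale, C0, Cnorm2 in *; simpl in *;
  unfold Re, Im in E1, E2;
  assert (c1 = fst lam * b1 - snd lam * b2 - a1 - (fst (d n) * b1 - snd (d n) * b2)) by lra; subst c1;
  assert (c2 = fst lam * b2 + snd lam * b1 - a2 - (fst (d n) * b2 + snd (d n) * b1)) by lra; subst c2;
  apply Cx_ext; unfold Re, Im; simpl; ring.
Qed.
Definition Tot : Cx := (Re K0 * U + (Re H1 + Re H2 + Re H3), Im K0 * U + (Im H1 + Im H2 + Im H3)).

Lemma build_num : ka * ka * (Cnorm2 al * U + Cnorm2 (Cadd (Cmul al (u m)) s) - Cnorm2 al * Cnorm2 (u m)) = 1 ->
  NumRange d Tot.
Proof.
  intros HN. exists wv. split.
  - pose proof wv_norm as W. replace 1 with (ka*ka*Cnorm2 al * U + (ka*ka*(Cnorm2 (Cadd (Cmul al (u m)) s) - Cnorm2 al * Cnorm2 (u m)) + 0 + 0)) by (rewrite <- HN; ring). exact W.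
  - split.
    + apply zsum_combo with (g := fun n => Cnorm2 (u n)) (m1 := (m-1)%Z) (m2 := m) (m3 := (m+1)%Z); auto.
      intros n. rewrite prod_pt. unfold cd, dlt.
      repeat destruct Z.eq_dec; unfold Cadd, scale, C0, Re; simpl; ring.
    + apply zsum_combo with (g := fun n => Cnorm2 (u n)) (m1 := (m-1)%Z) (m2 := m) (m3 := (m+1)%Z); auto.
      intros n. rewrite prod_pt. unfold cd, dlt.
      repeat destruct Z.eq_dec; unfold Cadd, scale, C0, Im; simpl; ring.
Qed.
End Build.

Definition alpha (U : R) (p s : Cx) : Cx := Csub (1, 0) (scale (1/U) (Cmul s (Cconj p))).
Definition Nr (U : R) (p al s : Cx) : R := Cnorm2 al * U + Cnorm2 (Cadd (Cmul al p) s) - Cnorm2 al * Cnorm2 p.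
Definition Xv (dm lam : Cx) : Cx := (0, 2 * (Im dm - Im lam)).
Definition av (p dm lam : Cx) : Cx := Cmul (Cconj p) (Xv dm lam).
Definition b0 (U : R) (p dm lam : Cx) : Cx := Csub (Csub dm lam) (scale (Cnorm2 p / U) (Xv dm lam)).

Lemma tot_id d u lam U m s ka : (forall n, Jop d u n = Cmul lam (u n)) -> U <> 0 ->
  Tot d u lam U m (alpha U (u m) s) s ka =
  scale (ka*ka) (Cadd (scale (Nr U (u m) (alpha U (u m) s) s) lam)
     (Cadd (Cmul (av (u m) (d m) lam) s) (scale (Cnorm2 s) (b0 U (u m) (d m) lam)))).
Proof.
  intros Heig HU. pose proof (Heig m) as E. unfold Jop in E.
  assert (E1 := f_equal Re E). assert (E2 := f_equal Im E).
  unfold Tot, K0, H1, H2, H3, Nr, alpha, av, b0, Xv.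
  replace (m - 1 + 1)%Z with m in * by lia.
  destruct (u (m+1)%Z) as [c1 c2]. destruct (u m) as [b1 b2]. destruct (u (m-1)%Z) as [a1 a2].
  destruct (d m) as [d1 d2]. destruct lam as [l1 l2]. destruct s as [s1 s2].
  unfold Re, Im, Cadd, Csub, Cmul, Cconj, scale, C0, Cnorm2 in *; simpl in *.
  assert (c1 = l1 * b1 - l2 * b2 - a1 - (d1 * b1 - d2 * b2)) by lra; subst c1.
  assert (c2 = l1 * b2 + l2 * b1 - a2 - (d1 * b2 + d2 * b1)) by lra; subst c2.
  apply Cx_ext; unfold Re, Im; simpl; field; auto.
Qed.

Lemma Nr_id U p s : U <> 0 -> Nr U p (alpha U p s) s = U + Cnorm2 s * (1 - Cnorm2 p / U).
Proof. intros HU. destruct p as [p1 p2]; destruct s as [s1 s2].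
  unfold Nr, alpha, Cnorm2, Cadd, Csub, Cmul, Cconj, scale, Re, Im; simpl. field; auto. Qed.

Lemma Cnorm2_mul z w : Cnorm2 (Cmul z w) = Cnorm2 z * Cnorm2 w.
Proof. destruct z, w; unfold Cnorm2, Cmul, Re, Im; simpl; ring. Qed.
Lemma Cnorm2_nonneg z : 0 <= Cnorm2 z.
Proof. destruct z; unfold Cnorm2, Re, Im; simpl; nra. Qed.
Lemma Cnorm2_scale r z : Cnorm2 (scale r z) = r * r * Cnorm2 z.
Proof. destruct z; unfold Cnorm2, scale, Re, Im; simpl; ring. Qed.
Lemma Cnorm2_sub_le z w : Cnorm2 (Csub z w) <= 2 * Cnorm2 z + 2 * Cnorm2 w.
Proof. destruct z as [z1 z2], w as [w1 w2]; unfold Cnorm2, Csub, Re, Im; simpl.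
  pose proof (Rle_0_sqr (z1+w1)); pose proof (Rle_0_sqr (z2+w2)); unfold Rsqr in *; nra. Qed.

Lemma Rdiv_le_0_compat a b : 0 <= a -> 0 < b -> 0 <= a / b.
Proof. intros; unfold Rdiv; apply Rmult_le_pos; [|apply Rlt_le, Rinv_0_lt_compat]; auto. Qed.

Lemma cmul_inv a q : 0 < Cnorm2 a -> Cmul a (scale (1 / Cnorm2 a) (Cmul q (Cconj a))) = q.
Proof. destruct a as [a1 a2], q as [q1 q2]. unfold Cnorm2, scale, Cmul, Cconj, Re, Im; simpl. intros H.
  apply Cx_ext; unfold Re, Im; simpl; field; lra. Qed.

Lemma interior_of (d u : Z -> Cx) (lam : Cx) (U : R) (m : Z)
  (Heig : forall n, Jop d u n = Cmul lam (u n))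
  (HU : zsum_to (fun n => Cnorm2 (u n)) U) (HUp : 0 < U) (Hpm : Cnorm2 (u m) <= U)
  (Hpnz : 0 < Cnorm2 (u m)) (Hne : Im (d m) <> Im lam) : in_interior (NumRange d) lam.
Proof.
  set (p := u m) in *.
  set (aa := av p (d m) lam). set (A := Cnorm2 aa).
  assert (HA : 0 < A).
  { unfold A, aa, av. rewrite Cnorm2_mul. apply Rmult_lt_0_compat.
    - replace (Cnorm2 (Cconj p)) with (Cnorm2 p) by (unfold Cnorm2, Cconj, Re, Im; simpl; ring). auto.
    - assert (Hx : Im (d m) - Im lam <> 0) by (intro; apply Hne; lra). pose proof (Rsqr_pos_lt _ Hx). unfold Rsqr in *. unfold Cnorm2, Xv, Re, Im in *; simpl. nra. }
  set (be := b0 U p (d m) lam). set (B2 := Cnorm2 be).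
  set (V := 1 - Cnorm2 p / U).
  assert (HV : 0 <= V <= 1).
  { unfold V. split.
    - assert (Cnorm2 p / U <= 1). { apply (Rmult_le_reg_r U); auto. replace (Cnorm2 p / U * U) with (Cnorm2 p) by (field; lra); lra. } lra.
    - assert (0 <= Cnorm2 p / U) by (apply Rdiv_le_0_compat; lra). lra. }
  assert (HB2 : 0 <= B2) by apply Cnorm2_nonneg.
  set (K := 32 * U * U * (B2 + 1) + 1).
  assert (HK : 0 < K) by (unfold K; nra).
  set (mu := Rmin 1 (A * A / K)).
  assert (Hmu : 0 < mu) by (unfold mu; apply Rmin_pos; [lra|apply Rdiv_lt_0_compat; nra]).
  exists (sqrt mu). split; [apply sqrt_lt_R0; auto|].
  intros w Hw. set (ze := Csub w lam) in *.
  assert (HZ : Cnorm2 ze < mu).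
  { unfold Cmod in Hw. rewrite <- (sqrt_sqrt mu) in Hw by lra. apply sqrt_lt_0_alt in Hw.
    rewrite sqrt_sqrt in Hw by lra. auto. }
  assert (HZ1 : Cnorm2 ze < 1) by (pose proof (Rmin_l 1 (A*A/K)); fold mu in H; lra).
  assert (HZK : Cnorm2 ze * K < A * A).
  { pose proof (Rmin_r 1 (A*A/K)); fold mu in H.
    apply (Rmult_lt_compat_r K) in HZ; auto. eapply Rlt_le_trans; [exact HZ|].
    apply (Rmult_le_compat_r K) in H; [|lra]. replace (A * A / K * K) with (A*A) in H by (field; lra). auto. }
  set (ga := Csub be (scale V ze)). set (c := scale U ze).
  set (G := Cnorm2 ga). set (C2 := Cnorm2 c).
  assert (HG : G <= 2 * B2 + 2).
  { unfold G, ga. eapply Rle_trans; [apply Cnorm2_sub_le|]. rewrite Cnorm2_scale.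
    pose proof (Cnorm2_nonneg ze). assert (V * V <= 1) by nra. fold B2. nra. }
  assert (HC2 : C2 = U * U * Cnorm2 ze) by (unfold C2, c; apply Cnorm2_scale).
  assert (HC2n : 0 <= C2) by apply Cnorm2_nonneg.
  assert (H16 : 16 * C2 * G <= A * A).
  { rewrite HC2. pose proof (Cnorm2_nonneg ze). pose proof (Cnorm2_nonneg ga). fold G in H0.
    assert (16 * (U*U*Cnorm2 ze) * G <= Cnorm2 ze * K).
    { unfold K. assert (0 <= U*U) by nra. assert (0 <= U * U * Cnorm2 ze) by nra. nra. }
    lra. }
  set (h := fun r => A * r * r - Cnorm2 (Csub c (scale (r*r) ga))).
  assert (Hcont : continuity h).
  { intros x. unfold h, Cnorm2, Csub, scale, Re, Im; simpl. reg. }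
  set (R1 := 4 * C2 / A).
  assert (HR1 : 0 <= R1) by (unfold R1; apply Rdiv_le_0_compat; lra).
  assert (Hh0 : h 0 <= 0).
  { unfold h. replace (0*0) with 0 by ring. replace (Csub c (scale 0 ga)) with c
      by (apply Cx_ext; unfold Csub, scale, Re, Im; simpl; ring).
    fold C2. lra. }
  assert (Hh1 : 0 <= h (sqrt R1)).
  { unfold h. rewrite Rmult_assoc, sqrt_sqrt by auto.
    pose proof (Cnorm2_sub_le c (scale R1 ga)). rewrite Cnorm2_scale in H. fold C2 G in H.
    assert (A * R1 = 4 * C2) by (unfold R1; field; lra).
    assert (R1 * R1 * G <= C2).
    { unfold R1. destruct (Req_dec C2 0) as [Hz|Hz].
      - rewrite Hz. replace (4 * 0 / A * (4 * 0 / A) * G) with 0 by (field; lra). lra.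
      - replace (4 * C2 / A * (4 * C2 / A) * G) with (C2 * (16 * C2 * G) / (A * A)) by (field; lra).
        apply (Rmult_le_reg_r (A*A)); [nra|]. replace (C2 * (16 * C2 * G) / (A * A) * (A * A)) with (C2 * (16 * C2 * G)) by (field; lra).
        nra. }
    lra. }
  destruct (IVT_cor h 0 (sqrt R1) Hcont (sqrt_pos R1) ltac:(nra)) as [r [[Hr0 Hr1] Hr]].
  unfold h in Hr.
  set (qv := Csub c (scale (r*r) ga)) in *.
  set (s := scale (1/A) (Cmul qv (Cconj aa))).
  assert (Hs2 : Cnorm2 s = r * r).
  { unfold s. rewrite Cnorm2_scale, Cnorm2_mul.
    replace (Cnorm2 (Cconj aa)) with A by (unfold A, Cnorm2, Cconj, Re, Im; simpl; ring).
    assert (Cnorm2 qv = A * r * r) by lra. rewrite H. field. lra. }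
  assert (Has : Cmul aa s = qv).
  { unfold s, A. apply cmul_inv. auto. }
  set (al := alpha U p s).
  set (N := Nr U p al s).
  assert (HN : N = U + Cnorm2 s * V) by (unfold N, al; apply Nr_id; lra).
  assert (HNp : 0 < N) by (rewrite HN; pose proof (Cnorm2_nonneg s); nra).
  set (ka := 1 / sqrt N).
  assert (Hka : ka * ka * N = 1).
  { unfold ka. replace (1 / sqrt N * (1 / sqrt N)) with (1 / (sqrt N * sqrt N)) by (field; apply Rgt_not_eq, sqrt_lt_R0; auto).
    rewrite sqrt_sqrt by lra. field; lra. }
  pose proof (build_num d u lam U m al s ka Heig HU ltac:(fold p; exact Hka)) as Hnum.
  unfold al, p in Hnum. rewrite (tot_id d u lam U m s ka Heig ltac:(lra)) in Hnum. fold p al in Hnum. fold N in Hnum.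
  fold aa be in Hnum.
  replace w with (scale (ka * ka) (Cadd (scale N lam) (Cadd (Cmul aa s) (scale (Cnorm2 s) be)))); auto.
  rewrite Has. unfold qv, c, ga, ze in *. rewrite Hs2 in *. rewrite HN.
  destruct w as [w1 w2]. destruct lam as [l1 l2]. destruct be as [e1 e2].
  unfold scale, Cadd, Csub, Re, Im in *; simpl in *.
  apply Cx_ext; unfold Re, Im; simpl.
  - replace (ka * ka) with (1 / N) by (field_simplify_eq; [lra|lra]). rewrite HN. field. lra.
  - replace (ka * ka) with (1 / N) by (field_simplify_eq; [lra|lra]). rewrite HN. field. lra.
Qed.

Definition pairf (f : Z -> R) (k : nat) : R := f (Z.of_nat k) + f (- Z.of_nat k - 1)%Z.

Lemma sum_ge_term (a : nat -> R) N k : (forall i, 0 <= a i) -> (k <= N)%nat -> a k <= sum_f_R0 a N.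
Proof. intros H; induction N; intros Hk.
  - assert (k = 0%nat) by lia; subst; simpl; lra.
  - destruct (Nat.eq_dec k (S N)) as [->|Hn].
    + rewrite tech5. pose proof (cond_pos_sum a N H). lra.
    + rewrite tech5. specialize (IHN ltac:(lia)). specialize (H (S N)). lra. Qed.

Lemma zsum_term f S : zsum_to f S -> (forall n, 0 <= f n) -> forall m, f m <= S.
Proof. intros Hs Hf m.
  set (k := Z.to_nat (if Z_le_dec 0 m then m else (- m - 1)%Z)).
  assert (Hp : f m <= pairf f k).
  { unfold pairf, k. destruct (Z_le_dec 0 m).
    - rewrite Z2Nat.id by lia. pose proof (Hf (- m - 1)%Z). lra.
    - rewrite Z2Nat.id by lia. replace (- (- m - 1) - 1)%Z with m by lia. pose proof (Hf (- m - 1)%Z). lra. }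
  eapply Rle_trans; [exact Hp|]. eapply Rle_trans; [apply (sum_ge_term (pairf f) k k); auto; intros; unfold pairf; pose proof (Hf (Z.of_nat i)); pose proof (Hf (- Z.of_nat i - 1)%Z); lra|].
  apply sum_incr; [exact Hs|]. intros; unfold pairf; pose proof (Hf (Z.of_nat n)); pose proof (Hf (- Z.of_nat n - 1)%Z); lra.
Qed.

Lemma ssum_sum g j : ssum g (S j) = sum_f_R0 g j.
Proof. induction j; simpl; [lra|]. simpl in IHj. rewrite <- IHj. lra. Qed.

Lemma zsum_tail f Sv : zsum_to f Sv -> (forall n, 0 <= f n) -> forall eps, 0 < eps ->
  exists K : nat, forall k, (K <= k)%nat -> forall j, ssum (fun i => pairf f (k+i)) j < eps.
Proof.
  intros Hs Hf eps he.
  destruct (Hs (eps/2) ltac:(lra)) as [K1 HK1].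
  exists (S K1). intros k Hk j. destruct j as [|j]; [simpl; lra|].
  rewrite ssum_sum.
  pose proof (tech2 (pairf f) (k-1) (k+j) ltac:(lia)) as T.
  replace (k + j - S (k - 1))%nat with j in T by lia.
  assert (E : sum_f_R0 (fun i => pairf f (S (k - 1) + i)) j = sum_f_R0 (fun i => pairf f (k + i)) j).
  { apply sum_eq; intros; f_equal; lia. }
  rewrite E in T.
  specialize (HK1 (k+j)%nat ltac:(lia)) as A1. specialize (HK1 (k-1)%nat ltac:(lia)) as A2.
  unfold Rdist in A1, A2. fold (pairf f) in A1, A2.
  apply Rabs_def2 in A1. apply Rabs_def2 in A2.
  change (sum_f_R0 (fun k0 : nat => f (Z.of_nat k0) + f (- Z.of_nat k0 - 1)%Z)) with (sum_f_R0 (pairf f)) in *.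
  lra.
Qed.

Lemma twoside (x q : Z -> R) (lam : R)
  (Heq : forall n, x (n-1)%Z + q n * x n + x (n+1)%Z = lam * x n)
  (Hx0 : forall eps, 0 < eps -> exists N : Z, forall n, (N <= Z.abs n)%Z -> Rabs (x n) < eps)
  (HmP : forall eps, 0 < eps -> exists K : nat, forall k, (K <= k)%nat -> forall j,
     ssum (fun i => INR (k+i) * Rabs (q (Z.of_nat (k+i)))) j < eps)
  (HmN : forall eps, 0 < eps -> exists K : nat, forall k, (K <= k)%nat -> forall j,
     ssum (fun i => INR (k+i) * Rabs (q (- Z.of_nat (k+i))%Z)) j < eps)
  (Hz : forall N : Z, exists n, (N <= Z.abs n)%Z /\ x n = 0)
  (Hnz : exists n, x n <> 0) : False.
Proof.
  destruct (classic (forall N : Z, exists n, (N <= n)%Z /\ x n = 0)) as [HP|HP].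
  - apply (oneside x q lam Heq); auto.
    intros eps he. destruct (Hx0 eps he) as [N HN]. exists (Z.abs N). intros n Hn. apply HN. lia.
  - apply not_all_ex_not in HP. destruct HP as [N0 HN0].
    assert (HN0' : forall n, (N0 <= n)%Z -> x n <> 0).
    { intros n Hn Hx. apply HN0. exists n; auto. }
    apply (oneside (fun n => x (- n)%Z) (fun n => q (- n)%Z) lam).
    + intros n. simpl. pose proof (Heq (- n)%Z) as E.
      replace (- (n-1))%Z with (- n + 1)%Z by lia. replace (- (n+1))%Z with (- n - 1)%Z by lia. lra.
    + intros eps he. destruct (Hx0 eps he) as [N HN]. exists (Z.abs N). intros n Hn. apply HN. lia.
    + intros eps he. destruct (HmN eps he) as [K HK]. exists K. intros k Hk j. apply HK; auto.
    + intros N. destruct (Hz (Z.max N (Z.max N0 0))) as [n [Hn Hx]].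
      assert (n < 0)%Z. { destruct (Z_lt_le_dec n 0); auto. exfalso. apply (HN0' n); auto; lia. }
      exists (- n)%Z. split; [lia|]. replace (- - n)%Z with n by lia. auto.
    + destruct Hnz as [n Hn]. exists (- n)%Z. replace (- - n)%Z with n by lia. auto.
Qed.

Lemma Cnorm2_pos z : z <> C0 -> 0 < Cnorm2 z.
Proof. destruct z as [a b]; unfold Cnorm2, C0, Re, Im; simpl. intros H.
  destruct (Req_dec a 0) as [Ea|Ea]; destruct (Req_dec b 0) as [Eb|Eb]; subst; [exfalso; auto| | |].
  - pose proof (Rsqr_pos_lt b Eb); unfold Rsqr in *; nra.
  - pose proof (Rsqr_pos_lt a Ea); unfold Rsqr in *; nra.
  - pose proof (Rsqr_pos_lt a Ea); pose proof (Rle_0_sqr b); unfold Rsqr in *; nra. Qed.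

Lemma abs_im_le z : Rabs (Im z) <= Cmod z.
Proof. unfold Cmod, Cnorm2. rewrite <- sqrt_Rsqr_abs. apply sqrt_le_1_alt. unfold Rsqr. pose proof (Rle_0_sqr (Re z)); unfold Rsqr in *; lra. Qed.

Lemma czC (d u : Z -> Cx) (lam : Cx) (Heig : forall n, Jop d u n = Cmul lam (u n)) a :
  u a = C0 -> u (a+1)%Z = C0 -> forall n, u n = C0.
Proof.
  intros H0 H1.
  assert (Hr : forall n, u (n+1)%Z = Csub (Csub (Cmul lam (u n)) (u (n-1)%Z)) (Cmul (d n) (u n))).
  { intros n. pose proof (Heig n) as E. unfold Jop in E. apply Cx_ext.
    - apply (f_equal Re) in E. unfold Csub, Cadd, Cmul, Re, Im in *; simpl in *. lra.
    - apply (f_equal Im) in E. unfold Csub, Cadd, Cmul, Re, Im in *; simpl in *. lra. }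
  assert (Hl : forall n, u (n-1)%Z = Csub (Csub (Cmul lam (u n)) (u (n+1)%Z)) (Cmul (d n) (u n))).
  { intros n. pose proof (Heig n) as E. unfold Jop in E. apply Cx_ext.
    - apply (f_equal Re) in E. unfold Csub, Cadd, Cmul, Re, Im in *; simpl in *. lra.
    - apply (f_equal Im) in E. unfold Csub, Cadd, Cmul, Re, Im in *; simpl in *. lra. }
  assert (Z0 : forall z w, Csub (Csub (Cmul z C0) C0) (Cmul w C0) = C0).
  { intros z w. apply Cx_ext; unfold Csub, Cmul, C0, Re, Im; simpl; ring. }
  assert (Hf : forall k : nat, u (a + Z.of_nat k)%Z = C0 /\ u (a + Z.of_nat k + 1)%Z = C0).
  { induction k as [|k [IH1 IH2]].
    - simpl. rewrite Z.add_0_r. auto.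
    - replace (a + Z.of_nat (S k))%Z with (a + Z.of_nat k + 1)%Z by lia. split; auto.
      rewrite Hr. replace (a + Z.of_nat k + 1 - 1)%Z with (a + Z.of_nat k)%Z by lia.
      rewrite IH1, IH2. apply Z0. }
  assert (Hb : forall k : nat, u (a - Z.of_nat k)%Z = C0 /\ u (a - Z.of_nat k + 1)%Z = C0).
  { induction k as [|k [IH1 IH2]].
    - simpl. rewrite Z.sub_0_r. auto.
    - replace (a - Z.of_nat (S k))%Z with (a - Z.of_nat k - 1)%Z by lia.
      replace (a - Z.of_nat k - 1 + 1)%Z with (a - Z.of_nat k)%Z by lia. split; auto.
      rewrite Hl. rewrite IH1, IH2. apply Z0. }
  intros n. destruct (Z_le_dec a n).
  - replace n with (a + Z.of_nat (Z.to_nat (n - a)))%Z by lia. apply Hf.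
  - replace n with (a - Z.of_nat (Z.to_nat (a - n)))%Z by lia. apply Hb.
Qed.

Lemma sq_abs_lt y e : 0 < e -> y * y < e * e -> Rabs y < e.
Proof. intros He H. destruct (Rcase_abs y); [rewrite Rabs_left|rewrite Rabs_right]; nra. Qed.

Theorem mainTheorem12 (d : Z -> Cx)
  (hdecay : forall eps, 0 < eps -> exists N : Z,
      forall n : Z, (N <= Z.abs n)%Z -> Cmod (d n) < eps)
  (hi : forall n : Z, Im (d n) = 0 \/ Im (d (n + 1)%Z) = 0)
  (hii : forall N : Z, exists n : Z, (N <= Z.abs n)%Z /\ Im (d n) <> 0)
  (hsum : exists s, zsum_to (fun k => IZR (Z.abs k) * Rabs (Re (d k))) s) :
  forall lam : Cx, ~ boundary_eigenvalue d lam.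
Proof.
  intros lam [[u [[U HU] [[n1 Hn1] Heig]]] [_ Hnint]].
  assert (HUn : forall n, 0 <= Cnorm2 (u n)) by (intros; apply Cnorm2_nonneg).
  assert (HUle : forall n, Cnorm2 (u n) <= U) by (apply zsum_term; auto).
  assert (HUp : 0 < U) by (pose proof (Cnorm2_pos _ Hn1); pose proof (HUle n1); lra).
  assert (KeyB : forall m, u m <> C0 -> Im (d m) = Im lam).
  { intros m Hm. destruct (Req_dec (Im (d m)) (Im lam)) as [E|E]; auto. exfalso. apply Hnint.
    apply (interior_of d u lam U m); auto. apply Cnorm2_pos; auto. }
  destruct (Req_dec (Im lam) 0) as [Hl0|Hl0].
  2: { destruct (hdecay (Rabs (Im lam)) ltac:(apply Rabs_pos_lt; auto)) as [N HN].
       set (n := Z.abs N).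
       destruct (classic (u n = C0)) as [Ha|Ha].
       - destruct (classic (u (n+1)%Z = C0)) as [Hb|Hb].
         + apply Hn1. apply (czC d u lam Heig n); auto.
         + pose proof (KeyB _ Hb) as Q1. pose proof (HN (n+1)%Z ltac:(unfold n; lia)) as Q2.
           pose proof (abs_im_le (d (n+1)%Z)) as Q3. rewrite Q1 in Q3. lra.
       - pose proof (KeyB _ Ha) as Q1. pose proof (HN n ltac:(unfold n; lia)) as Q2.
         pose proof (abs_im_le (d n)) as Q3. rewrite Q1 in Q3. lra. }
  assert (Hzero : forall n, Im (d n) <> 0 -> u n = C0).
  { intros n Hn. destruct (classic (u n = C0)); auto. exfalso. apply Hn. rewrite KeyB; auto. }
  assert (HE : forall n, Im (d n) * Re (u n) = 0 /\ Im (d n) * Im (u n) = 0).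
  { intros n. destruct (Req_dec (Im (d n)) 0) as [E|E].
    - rewrite E; split; ring.
    - rewrite (Hzero n E). unfold C0, Re, Im; simpl; split; ring. }
  destruct hsum as [sv Hs].
  set (f := fun k => IZR (Z.abs k) * Rabs (Re (d k))) in *.
  assert (Hf : forall n, 0 <= f n).
  { intros; unfold f; apply Rmult_le_pos; [apply IZR_le; lia|apply Rabs_pos]. }
  assert (HmP : forall eps, 0 < eps -> exists K : nat, forall k, (K <= k)%nat -> forall j,
     ssum (fun i => INR (k+i) * Rabs (Re (d (Z.of_nat (k+i))))) j < eps).
  { intros eps he. destruct (zsum_tail f sv Hs Hf eps he) as [K HK]. exists K. intros k Hk j.
    eapply Rle_lt_trans; [|apply (HK k Hk j)]. apply ssum_le. intros i.
    unfold pairf. pose proof (Hf (- Z.of_nat (k+i) - 1)%Z).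
    unfold f at 1. rewrite Z.abs_eq by lia. rewrite <- INR_IZR_INZ. lra. }
  assert (HmN : forall eps, 0 < eps -> exists K : nat, forall k, (K <= k)%nat -> forall j,
     ssum (fun i => INR (k+i) * Rabs (Re (d (- Z.of_nat (k+i))%Z))) j < eps).
  { intros eps he. destruct (zsum_tail f sv Hs Hf eps he) as [K HK]. exists (S K). intros k Hk j.
    eapply Rle_lt_trans; [|apply (HK (k-1)%nat ltac:(lia) j)]. apply ssum_le. intros i.
    unfold pairf. pose proof (Hf (Z.of_nat (k - 1 + i))).
    replace (- Z.of_nat (k - 1 + i) - 1)%Z with (- Z.of_nat (k+i))%Z by lia.
    unfold f at 2. rewrite Z.abs_neq by lia. rewrite Z.opp_involutive. rewrite <- INR_IZR_INZ. lra. }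
  assert (Hu0 : forall e, 0 < e -> exists N : Z, forall n, (N <= Z.abs n)%Z -> Cnorm2 (u n) < e).
  { intros e he. destruct (zsum_tail _ U HU HUn e he) as [K HK]. exists (Z.of_nat (S K)).
    intros n Hn. destruct (Z_le_dec 0 n).
    - specialize (HK (Z.to_nat n) ltac:(lia) 1%nat). cbn [ssum] in HK. unfold pairf in HK.
      rewrite Nat.add_0_r, Z2Nat.id in HK by lia. pose proof (HUn (- n - 1)%Z). lra.
    - specialize (HK (Z.to_nat (- n - 1)) ltac:(lia) 1%nat). cbn [ssum] in HK. unfold pairf in HK.
      rewrite Nat.add_0_r, Z2Nat.id in HK by lia. replace (- (- n - 1) - 1)%Z with n in HK by lia.
      pose proof (HUn (- n - 1)%Z). lra. }
  assert (Gen : forall x : Z -> R,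
     (forall n, x (n-1)%Z + Re (d n) * x n + x (n+1)%Z = Re lam * x n) ->
     (forall n, x n * x n <= Cnorm2 (u n)) -> (forall n, u n = C0 -> x n = 0) ->
     (exists n, x n <> 0) -> False).
  { intros x Hx Hxb Hx0 Hxn. apply (twoside x (fun n => Re (d n)) (Re lam) Hx); auto.
    - intros e he. destruct (Hu0 (e*e) ltac:(nra)) as [N HN]. exists N. intros n Hn.
      apply sq_abs_lt; auto. pose proof (HN n Hn). pose proof (Hxb n). lra.
    - intros N. destruct (hii N) as [n [Hn Hd]]. exists n. split; auto. }
  destruct (Req_dec (Re (u n1)) 0) as [Hr|Hr].
  - apply (Gen (fun n => Im (u n))).
    + intros n. pose proof (HE n) as [E1 _]. pose proof (Heig n) as E. apply (f_equal Im) in E.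
      unfold Jop, Cadd, Cmul, Re, Im in *; simpl in *. rewrite Hl0 in E. lra.
    + intros n. unfold Cnorm2. pose proof (Rle_0_sqr (Re (u n))). unfold Rsqr in *. lra.
    + intros n H. rewrite H. reflexivity.
    + exists n1. intros Hi. apply Hn1. destruct (u n1) as [a b]. unfold Re, Im, C0 in *; simpl in *. subst; auto.
  - apply (Gen (fun n => Re (u n))).
    + intros n. pose proof (HE n) as [_ E2]. pose proof (Heig n) as E. apply (f_equal Re) in E.
      unfold Jop, Cadd, Cmul, Re, Im in *; simpl in *. rewrite Hl0 in E. lra.
    + intros n. unfold Cnorm2. pose proof (Rle_0_sqr (Im (u n))). unfold Rsqr in *. lra.
    + intros n H. rewrite H. reflexivity.
    + exists n1. auto.
Qed.
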